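(* Let $\bar u\in\mathbb{R}^n_{\ge 0}$, $\mathcal{X}=[0,\bar u]$, and let $f:\mathcal{X}\to\mathbb{R}$ be differentiable, nonnegative, DR-submodular and $\mu$-strongly DR-submodular for some $\mu\ge0$. Let $\mathcal{P}\subseteq\mathcal{X}$ be a nonempty compact convex down-closed set and let $x^*\in\arg\max_{x\in\mathcal{P}}f(x)$. Let $x\in\mathcal{P}$, let $\mathcal{Q}:=\{y\in\mathcal{P}: y\le \bar u-x\}$, and let $z\in\mathcal{Q}$. Define $z^*:=x\vee x^*-x$. Then $$\max\{f(x),f(z)\}\;\ge\;\frac14\big[f(x^* )-g_{\mathcal{P}}(x)-g_{\mathcal{Q}}(z)\big]+\frac{\mu}{8}\big(\|x-x^*\|^2+\|z-z^*\|^2\big).$$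
   Context: Vector inequalities are componentwise; $\vee,\wedge$ are coordinatewise max/min; $\|\cdot\|$ is the Euclidean norm. A set $\mathcal{P}\subseteq[0,\bar u]$ is down-closed if $x\in\mathcal{P}$ and $0\le y\le x$ imply $y\in\mathcal{P}$. DR-submodular: for all $a\le b$ in $\mathcal{X}$, $i\in[n]$, $k\ge0$ with $a+ke_i,b+ke_i\in\mathcal{X}$, $f(a+ke_i)-f(a)\ge f(b+ke_i)-f(b)$. $\mu$-strongly DR-submodular: for all $x\in\mathcal{X}$ and $v\in\mathbb{R}^n_{\ge0}\cup(-\mathbb{R}^n_{\ge0})$ with $x+v\in\mathcal{X}$, $f(x+v)\le f(x)+\langle\nabla f(x),v\rangle-\frac{\mu}{2}\|v\|^2$. For a compact set $\mathcal{C}\subseteq\mathcal{X}$ and $w\in\mathcal{C}$, the non-stationarity is $g_{\mathcal{C}}(w):=\max_{v\in\mathcal{C}}\langle v-w,\nabla f(w)\rangle$. *)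

(* Defs.v *)
From Stdlib Require Import Reals.
From mathcomp Require Import all_boot.

Set Implicit Arguments.
Unset Strict Implicit.
Unset Printing Implicit Defensive.

Local Open Scope R_scope.

Definition vec (n : nat) := 'I_n -> R.

Definition vzero (n : nat) : vec n := fun _ => 0.
Definition vadd (n : nat) (x y : vec n) : vec n := fun i => x i + y i.
Definition vsub (n : nat) (x y : vec n) : vec n := fun i => x i - y i.
Definition vscale (n : nat) (t : R) (x : vec n) : vec n := fun i => t * x i.
Definition vmax (n : nat) (x y : vec n) : vec n := fun i => Rmax (x i) (y i).
Definition unitv (n : nat) (i : 'I_n) (k : R) : vec n :=
  fun j => if j == i then k else 0.

Definition vle (n : nat) (x y : vec n) : Prop := forall i, x i <= y i.

Definition dot (n : nat) (x y : vec n) : R := \big[Rplus/0]_(i < n) (x i * y i).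
Definition sqnorm (n : nat) (x : vec n) : R := dot x x.
Definition norm (n : nat) (x : vec n) : R := sqrt (sqnorm x).

Definition box (n : nat) (ub : vec n) (x : vec n) : Prop :=
  vle (@vzero n) x /\ vle x ub.

Definition differentiable_on_with_grad (n : nat) (X : vec n -> Prop)
    (f : vec n -> R) (grad : vec n -> vec n) : Prop :=
  forall x, X x -> forall eps, 0 < eps -> exists delta, 0 < delta /\
    forall y, X y -> norm (vsub y x) < delta ->
      Rabs (f y - f x - dot (grad x) (vsub y x)) <= eps * norm (vsub y x).

Definition nonneg_on (n : nat) (X : vec n -> Prop) (f : vec n -> R) : Prop :=
  forall x, X x -> 0 <= f x.

Definition DR_submodular (n : nat) (X : vec n -> Prop) (f : vec n -> R) : Prop :=
  forall a b, X a -> X b -> vle a b -> forall (i : 'I_n) (k : R), 0 <= k ->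
    X (vadd a (unitv i k)) -> X (vadd b (unitv i k)) ->
    f (vadd a (unitv i k)) - f a >= f (vadd b (unitv i k)) - f b.

Definition strongly_DR_submodular (n : nat) (X : vec n -> Prop) (f : vec n -> R)
    (grad : vec n -> vec n) (mu : R) : Prop :=
  forall x v, X x -> (vle (@vzero n) v \/ vle v (@vzero n)) -> X (vadd x v) ->
    f (vadd x v) <= f x + dot (grad x) v - mu / 2 * sqnorm v.

Definition convex_set (n : nat) (P : vec n -> Prop) : Prop :=
  forall x y t, P x -> P y -> 0 <= t <= 1 ->
    P (vadd (vscale t x) (vscale (1 - t) y)).

Definition closed_set (n : nat) (P : vec n -> Prop) : Prop :=
  forall (s : nat -> vec n) x, (forall k, P (s k)) ->
    Un_cv (fun k => norm (vsub (s k) x)) 0 -> P x.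

Definition bounded_set (n : nat) (P : vec n -> Prop) : Prop :=
  exists M, forall x, P x -> norm x <= M.

(* Heine-Borel: compact in R^n = closed and bounded *)
Definition compact_set (n : nat) (P : vec n -> Prop) : Prop :=
  closed_set P /\ bounded_set P.

Definition down_closed (n : nat) (P : vec n -> Prop) : Prop :=
  forall x y, P x -> vle (@vzero n) y -> vle y x -> P y.

(* m = g_C(w) = max_{v in C} <v - w, grad f(w)> *)
Definition is_nonstationarity (n : nat) (C : vec n -> Prop) (grad : vec n -> vec n)
    (w : vec n) (m : R) : Prop :=
  (exists v, C v /\ dot (vsub v w) (grad w) = m) /\
  (forall v, C v -> dot (vsub v w) (grad w) <= m).

(* Main.v *)
Require Import Defs.
From Stdlib Require Import Reals Lra Psatz FunctionalExtensionality.
From mathcomp Require Import all_boot.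
Local Open Scope R_scope.
Set Implicit Arguments.
Unset Strict Implicit.

Definition vmin (n : nat) (x y : vec n) : vec n := fun i => Rmin (x i) (y i).

Lemma sum_lin n (F G H : 'I_n -> R) : (forall i, H i = F i + G i) ->
  \big[Rplus/0]_(i < n) H i = \big[Rplus/0]_(i < n) F i + \big[Rplus/0]_(i < n) G i.
Proof.
move=> HH.
apply: (big_ind3 (fun a b c => c = a + b)).
- ring.
- move=> ? ? ? ? ? ? -> ->; ring.
- move=> i _; exact: HH.
Qed.

Lemma sum_ge0 n (F : 'I_n -> R) : (forall i, 0 <= F i) -> 0 <= \big[Rplus/0]_(i < n) F i.
Proof.
move=> H; apply: (big_ind (fun a => 0 <= a)); [lra| move=> ? ? ? ?; lra| move=> i _; exact: H].
Qed.

Definition trunc n (v : vec n) (m : nat) : vec n := fun j => if (j < m)%N then v j else 0.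

Lemma box_trunc n (ub a v : vec n) m : box ub a -> vle (@vzero n) v -> box ub (vadd a v) ->
  box ub (vadd a (trunc v m)).
Proof.
move=> [Ha1 Ha2] Hv [_ Hb]; split=> j; move: (Ha1 j) (Ha2 j) (Hv j) (Hb j);
rewrite /vadd /trunc /vzero; case: (j < m)%N => /=; lra.
Qed.

Lemma vec_DR n (ub : vec n) f (a b v : vec n) : DR_submodular (box ub) f ->
  box ub a -> box ub b -> vle a b -> vle (@vzero n) v -> box ub (vadd b v) ->
  f (vadd a v) - f a >= f (vadd b v) - f b.
Proof.
move=> Hdr Ha Hb Hab Hv Hbv.
have Hav : box ub (vadd a v).
  case: Ha Hbv => [Ha1 _] [_ H2]; split=> j; move: (Ha1 j) (Hab j) (Hv j) (H2 j);
  rewrite /vadd /vzero; lra.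
suff: forall m, (m <= n)%N -> f (vadd a (trunc v m)) - f a >= f (vadd b (trunc v m)) - f b.
  move=> /(_ n (leqnn n)).
  have -> : trunc v n = v by apply: functional_extensionality => j; rewrite /trunc ltn_ord.
  done.
elim=> [|m IH] Hm.
  have -> : trunc v 0 = @vzero n by apply: functional_extensionality => j; rewrite /trunc.
  have E : forall c : vec n, vadd c (@vzero n) = c.
    by move=> c; apply: functional_extensionality => j; rewrite /vadd /vzero; lra.
  rewrite !E; lra.
have Hmn : (m < n)%N by [].
set i := Ordinal Hmn.
have E : forall c : vec n, vadd c (trunc v m.+1) = vadd (vadd c (trunc v m)) (unitv i (v i)).
  move=> c; apply: functional_extensionality => j; rewrite /vadd /trunc /unitv.
  case: (ltngtP j m) => Hj.
  - have -> : (j < m.+1)%N by apply: ltnW.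
    have -> : (j == i) = false by apply/eqP => Hji; move: Hj; rewrite Hji /=; rewrite ?ltnn.
    lra.
  - have -> : (j < m.+1)%N = false by apply/negbTE; rewrite -leqNgt.
    have -> : (j == i) = false by apply/eqP => Hji; move: Hj; rewrite Hji /=; rewrite ?ltnn.
    lra.
  - have -> : (j < m.+1)%N by rewrite Hj.
    have -> : (j == i) by apply/eqP/val_inj.
    have -> : v j = v i by congr v; apply/val_inj.
    lra.
have IH' := IH (ltnW Hm).
have H1 := Hdr (vadd a (trunc v m)) (vadd b (trunc v m))
  (box_trunc m Ha Hv Hav) (box_trunc m Hb Hv Hbv) ltac:(move=> j; move: (Hab j); rewrite /vadd; lra)
  i (v i) (Hv i) ltac:(rewrite -E; exact: box_trunc) ltac:(rewrite -E; exact: box_trunc).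
rewrite !E; lra.
Qed.
Theorem proposition1 (n : nat) (ub : vec n) (f : vec n -> R)
    (grad : vec n -> vec n) (mu : R) (P : vec n -> Prop)
    (xstar x z : vec n) (gP gQ : R) :
  vle (@vzero n) ub ->
  differentiable_on_with_grad (box ub) f grad ->
  nonneg_on (box ub) f ->
  DR_submodular (box ub) f ->
  0 <= mu ->
  strongly_DR_submodular (box ub) f grad mu ->
  (forall y, P y -> box ub y) ->
  (exists y, P y) ->
  compact_set P ->
  convex_set P ->
  down_closed P ->
  P xstar -> (forall y, P y -> f y <= f xstar) ->
  P x ->
  let Q := fun y => P y /\ vle y (vsub ub x) in
  Q z ->
  let zstar := vsub (vmax x xstar) x in
  is_nonstationarity P grad x gP ->
  is_nonstationarity Q grad z gQ ->
  Rmax (f x) (f z) >=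
    1 / 4 * (f xstar - gP - gQ)
    + mu / 8 * (sqnorm (vsub x xstar) + sqnorm (vsub z zstar)).
Proof.
move=> Hub _ Hnn Hdr Hmu Hs HPb _ _ _ Hdc HPxs Hopt HPx Q HQz zs [_ HgP] [_ HgQ].
have Bx := HPb _ HPx. have Bxs := HPb _ HPxs.
case: HQz => HPz Hzle. have Bz := HPb _ HPz.
set xM := vmax x xstar. set xm := vmin x xstar.
set zM := vmax z zs. set zm := vmin z zs.
have HQzs : Q zs.
  split.
  - apply: (Hdc xstar) => //.
    + move=> j; rewrite /zs /xM /vsub /vmax /vzero; move: (Rmax_l (x j) (xstar j)); lra.
    + move=> j; case: Bx Bxs => [H1 _] [H2 _]; move: (H1 j) (H2 j).
      rewrite /zs /xM /vsub /vmax /vzero /Rmax => a b; case: Rle_dec; lra.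
  - move=> j; case: Bxs Bx => [_ H2] [_ H3]; move: (H2 j) (H3 j).
    rewrite /zs /xM /vsub /vmax /Rmax => a b; case: Rle_dec; lra.
have Bzs := HPb _ HQzs.1.
have BxM : box ub xM.
  case: Bx Bxs => [A1 A2] [B1 B2]; split=> j; move: (A1 j) (A2 j) (B1 j) (B2 j);
  rewrite /xM /vmax /vzero => *; [apply: Rle_trans (Rmax_l _ _) | apply: Rmax_lub]; lra.
have Bxm : box ub xm.
  case: Bx Bxs => [A1 A2] [B1 B2]; split=> j; move: (A1 j) (A2 j) (B1 j) (B2 j);
  rewrite /xm /vmin /vzero => *; [apply: Rmin_glb | apply: Rle_trans (Rmin_l _ _) _]; lra.
have BzM : box ub zM.
  case: Bz Bzs => [A1 A2] [B1 B2]; split=> j; move: (A1 j) (A2 j) (B1 j) (B2 j);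
  rewrite /zM /vmax /vzero => *; [apply: Rle_trans (Rmax_l _ _) | apply: Rmax_lub]; lra.
have Bzm : box ub zm.
  case: Bz Bzs => [A1 A2] [B1 B2]; split=> j; move: (A1 j) (A2 j) (B1 j) (B2 j);
  rewrite /zm /vmin /vzero => *; [apply: Rmin_glb | apply: Rle_trans (Rmin_l _ _) _]; lra.
have Eadd : forall c d : vec n, vadd c (vsub d c) = d.
  by move=> c d; apply: functional_extensionality => j; rewrite /vadd /vsub; lra.
have G1 := Hs x (vsub xM x) Bx
  ltac:(left; move=> j; rewrite /vsub /xM /vmax /vzero; move: (Rmax_l (x j) (xstar j)); lra)
  ltac:(rewrite Eadd; exact BxM).
have G2 := Hs x (vsub xm x) Bx
  ltac:(right; move=> j; rewrite /vsub /xm /vmin /vzero; move: (Rmin_l (x j) (xstar j)); lra)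
  ltac:(rewrite Eadd; exact Bxm).
have G3 := Hs z (vsub zM z) Bz
  ltac:(left; move=> j; rewrite /vsub /zM /vmax /vzero; move: (Rmax_l (z j) (zs j)); lra)
  ltac:(rewrite Eadd; exact BzM).
have G4 := Hs z (vsub zm z) Bz
  ltac:(right; move=> j; rewrite /vsub /zm /vmin /vzero; move: (Rmin_l (z j) (zs j)); lra)
  ltac:(rewrite Eadd; exact Bzm).
rewrite !Eadd in G1 G2 G3 G4.
have Mx : forall a b : R, Rmax a b + Rmin a b = a + b.
  move=> a b; rewrite /Rmax /Rmin; case: Rle_dec; lra.
have D1 : dot (grad x) (vsub xM x) + dot (grad x) (vsub xm x) = dot (vsub xstar x) (grad x).
  rewrite /dot; symmetry; apply: sum_lin => j; rewrite /vsub /xM /xm /vmax /vmin.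
  have := Mx (x j) (xstar j); nra.
have D2 : dot (grad z) (vsub zM z) + dot (grad z) (vsub zm z) = dot (vsub zs z) (grad z).
  rewrite /dot; symmetry; apply: sum_lin => j; rewrite /vsub /zM /zm /vmax /vmin.
  have := Mx (z j) (zs j); nra.
have Sq : forall a b : R, (Rmax a b - a) * (Rmax a b - a) + (Rmin a b - a) * (Rmin a b - a)
    = (a - b) * (a - b).
  move=> a b; rewrite /Rmax /Rmin; case: Rle_dec => _; ring.
have N1 : sqnorm (vsub xM x) + sqnorm (vsub xm x) = sqnorm (vsub x xstar).
  rewrite /sqnorm /dot; symmetry; apply: sum_lin => j; rewrite /vsub /xM /xm /vmax /vmin Sq //.
have N2 : sqnorm (vsub zM z) + sqnorm (vsub zm z) = sqnorm (vsub z zs).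
  rewrite /sqnorm /dot; symmetry; apply: sum_lin => j; rewrite /vsub /zM /zm /vmax /vmin Sq //.
have gP1 := HgP xstar HPxs.
have gQ1 := HgQ zs HQzs.
have Bz0 : box ub (@vzero n).
  case: Bx => [A1 A2]; split=> j; move: (A1 j) (A2 j); rewrite /vzero; lra.
have DR1 := vec_DR Hdr Bz0 Bxm
  ltac:(move=> j; case: Bxm => [A _]; exact: A)
  Bzs.1 ltac:(have -> : vadd xm zs = xstar; [|exact Bxs]).
have E0 : vadd (@vzero n) zs = zs.
  by apply: functional_extensionality => j; rewrite /vadd /vzero; lra.
have E1 : vadd xm zs = xstar.
  apply: functional_extensionality => j; rewrite /vadd /xm /zs /vsub /vmin /vmax.
  have := Mx (x j) (xstar j); lra.
rewrite E0 E1 in DR1.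
have BzMx : box ub (vadd zM x).
  case: BzM Bx => [A1 _] [B1 _]; split=> j.
  - move: (A1 j) (B1 j); rewrite /vadd /vzero; lra.
  - move: (Hzle j) (HQzs.2 j) (B1 j); rewrite /vadd /zM /vmax /vsub => a b c.
    have : Rmax (z j) (zs j) <= ub j - x j by apply: Rmax_lub.
    lra.
have DR2 := vec_DR Hdr Bzs BzM
  ltac:(move=> j; exact: Rmax_r) Bx.1 BzMx.
have E2 : vadd zs x = xM.
  apply: functional_extensionality => j; rewrite /vadd /zs /xM /vsub; lra.
rewrite E2 in DR2.
have := Hnn _ Bxm. have := Hnn _ Bzm. have := Hnn _ Bz0. have := Hnn _ BzMx.
have := Rmax_l (f x) (f z). have := Rmax_r (f x) (f z).
move: G1 G2 G3 G4 D1 D2 N1 N2 gP1 gQ1 DR1 DR2.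
set a1 := sqnorm (vsub xM x). set a2 := sqnorm (vsub xm x).
set a3 := sqnorm (vsub zM z). set a4 := sqnorm (vsub zm z).
set N := sqnorm (vsub x xstar). set M := sqnorm (vsub z zs).
move=> G1 G2 G3 G4 D1 D2 N1 N2 gP1 gQ1 DR1 DR2 *.
have -> : mu / 8 * (N + M) = 1/4 * (mu / 2 * a1 + mu / 2 * a2 + mu / 2 * a3 + mu / 2 * a4).
  rewrite -N1 -N2; field.
move: DR1 => /(_ erefl) DR1. lra.
Qed.
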